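(* Let $\tau\in(0,1]$, suppose $k\,\alpha^{(2-\tau)d}\ge 2$, and let $\beta\ge 1$ be an integer. Run $\beta$ independent copies of the Fast-Filter model described in the context (with independent randomness), producing survival sets $S^{(j)}_1,\dots,S^{(j)}_k$ for $j=1,\dots,\beta$. Call a pair of distinct $u,v\in V$ close if $|\Gamma(u)\cap\Gamma(v)|\ge\tau d$, and say it is found if there exist $j\in[\beta]$ and $i\in[k]$ with $u,v\in S^{(j)}_i$. (a) For each close pair, the probability that it is not found is at most $2^{-\beta}$. (b) If $N\ge 2$ and $\beta\ge 3\log_2 N$, then with probability at least $1-1/N$ every close pair is found.
   Context: Let $G=(U,V,E)$ be a bipartite graph with $|U|=M$ and $|V|=N$. For $v\in V$ let $\Gamma(v)\subseteq U$ be its set of neighbours, and assume $|\Gamma(v)|=d\ge 1$ for every $v\in V$. Let $k=2^{m}$ and $\alpha=2^{-r}$, where $m,r$ are positive integers. Identify $[k]=\{1,\dots,k\}$ bijectively with the vector space $\mathrm{GF}(2)^m$ (for instance via the binary representation of $i-1$). Fast-Filter model: for each $u\in U$, independently draw a uniformly random matrix $A'_u\in\mathrm{GF}(2)^{r\times m}$ and a uniformly random vector $b'_u\in\mathrm{GF}(2)^{r}$; all of these are mutually independent. For $v\in V$, let $A^v$ be the $(dr)\times m$ matrix obtained by stacking the matrices $A'_u$, $u\in\Gamma(v)$, in a fixed order, and let $b^v\in\mathrm{GF}(2)^{dr}$ be obtained by stacking the $b'_u$, $u\in\Gamma(v)$, in the same order. For $i\in[k]$ (viewed as a vector in $\mathrm{GF}(2)^m$),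 the survival set is $S_i=\{v\in V: A^v i+b^v=0\}$, with arithmetic over $\mathrm{GF}(2)$. *)

(* Defs.v *)
From Stdlib Require Import Reals.
From HB Require Import structures.
From mathcomp Require Import all_boot all_order all_algebra all_field.

Set Implicit Arguments.
Unset Strict Implicit.
Unset Printing Implicit Defensive.

Section FastFilter.
Local Open Scope ring_scope.

(* The randomness attached to one vertex u in U in one copy of the model:
   a matrix A'_u in GF(2)^{r x m} and a vector b'_u in GF(2)^r. *)
Definition vrand (r m : nat) : finType := ('M['F_2]_(r, m) * 'cV['F_2]_r)%type.

Definition run (M r m : nat) : finType := {ffun 'I_M -> vrand r m}.

Definition FFspace (M r m beta : nat) : finType := {ffun 'I_beta -> run M r m}.

(* Survival set S_i for i in [k] identified with x in GF(2)^m: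
   v survives iff A^v x + b^v = 0, where A^v, b^v stack the blocks A'_u, b'_u,
   u in Gamma(v); a stacked vector is zero iff each of its blocks is zero. *)
Definition survset (M N r m : nat) (Gam : 'I_N -> {set 'I_M})
    (s : run M r m) (x : 'cV['F_2]_m) : {set 'I_N} :=
  [set v | [forall u in Gam v, (s u).1 *m x + (s u).2 == 0]].

End FastFilter.

Definition found (M N r m beta : nat) (Gam : 'I_N -> {set 'I_M})
    (w : FFspace M r m beta) (u v : 'I_N) : bool :=
  [exists j : 'I_beta, exists x : 'cV['F_2]_m,
     (u \in survset Gam (w j) x) && (v \in survset Gam (w j) x)].

Local Open Scope R_scope.

Definition closeb (M N d : nat) (Gam : 'I_N -> {set 'I_M}) (tau : R) (u v : 'I_N) : bool :=
  (u != v) && (if Rle_dec (tau * INR d) (INR #|Gam u :&: Gam v|) then true else false).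

Definition prob (T : finType) (E : {set T}) : R := INR #|E| / INR #|T|.

(* Main.v *)
Require Import Defs.
From Stdlib Require Import Reals.
From HB Require Import structures.
From mathcomp Require Import all_boot all_order all_algebra all_field.
Set Implicit Arguments.
Unset Strict Implicit.
Unset Printing Implicit Defensive.
Import GRing.Theory.
From Stdlib Require Import Lra Psatz.
From mathcomp Require Import zify.

Section Lin.
Local Open Scope ring_scope.
Variable F : finFieldType.

Lemma fiber r m (z : 'cV[F]_m) : z != 0 ->
  (#|[set A : 'M[F]_(r,m) | A *m z == 0%R]| * #|{: 'cV[F]_r}| = #|{: 'M[F]_(r,m)}|)%N.
Proof.
move=> nz.
have [j Hj] : exists j, z j 0 != 0.
  apply/existsP; apply: contraR nz => /existsPn H; apply/eqP/matrixP => i k.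
  by rewrite (ord1 k) mxE; apply/eqP; move: (H i); rewrite negbK.
have fib b : #|[set A : 'M[F]_(r,m) | A *m z == b]| = #|[set A : 'M[F]_(r,m) | A *m z == 0%R]|.
  pose E := (z j 0)^-1 *: (b *m delta_mx 0 j).
  have EZ : E *m z = b.
    rewrite /E -scalemxAl -mulmxA -rowE (mx11_scalar (row j z)) mxE mul_mx_scalar.
    by rewrite scalerA mulVf // scale1r.
  have -> : [set A : 'M[F]_(r,m) | A *m z == b] = (fun A => A + E) @: [set A | A *m z == 0].
    apply/setP => A; rewrite inE; apply/eqP/imsetP => [H|[B]].
      exists (A - E); last by rewrite subrK.
      by rewrite inE mulmxBl H EZ subrr.
    by rewrite inE => /eqP H ->; rewrite mulmxDl H EZ add0r.
  by rewrite card_imset //; apply: addIr.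
apply/esym; rewrite -[X in X = _]sum1_card (partition_big (fun A => A *m z) predT) //=.
rewrite mulnC -sum_nat_const; apply: eq_bigr => b _.
by rewrite -(fib b) -sum1_card; apply: eq_bigl => A; rewrite inE.
Qed.

Lemma L1 r m (x : 'cV[F]_m) :
  #|[set a : 'M[F]_(r,m) * 'cV[F]_r | a.1 *m x + a.2 == 0]| = #|{: 'M[F]_(r,m)}|.
Proof.
have -> : [set a : 'M[F]_(r,m) * 'cV[F]_r | a.1 *m x + a.2 == 0] =
   (fun A => (A, - (A *m x))) @: setT.
  apply/setP => [[A b]]; rewrite inE /=; apply/idP/imsetP => [H|[B _ [-> ->]]].
    have eb : b = - (A *m x) by apply/eqP; rewrite -addr_eq0 addrC.
    by exists A; rewrite ?inE ?eb.
  by apply/eqP; apply: subrr.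
by rewrite card_imset ?cardsT // => A B [].
Qed.

Lemma L2 r m (x y : 'cV[F]_m) : x != y ->
  (#|[set a : 'M[F]_(r,m) * 'cV[F]_r | ((a.1 *m x + a.2 == 0) && (a.1 *m y + a.2 == 0))%R]|
    * #|{: 'cV[F]_r}| = #|{: 'M[F]_(r,m)}|)%N.
Proof.
move=> nxy.
have -> : [set a : 'M[F]_(r,m) * 'cV[F]_r | (a.1 *m x + a.2 == 0) && (a.1 *m y + a.2 == 0)] =
   (fun A => (A, - (A *m x))) @: [set A | A *m (x - y) == 0].
  apply/setP => [[A b]]; rewrite inE /=; apply/idP/imsetP => [/andP[H1 H2]|[B]].
    have eb : b = - (A *m x) by apply/eqP; rewrite -addr_eq0 addrC.
    exists A; last by rewrite eb.
    rewrite inE mulmxBr; rewrite eb in H2; by rewrite -oppr_eq0 opprB.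
  rewrite inE => /eqP H [-> ->]; rewrite subrr eqxx /=.
  by move: H; rewrite mulmxBr => /eqP; rewrite subr_eq0 => /eqP ->; rewrite subrr.
rewrite card_imset; last by move=> A B [].
by apply: fiber; rewrite subr_eq0.
Qed.
End Lin.
Lemma famcount (I V : finType) (S : {set I}) (P : pred V) e :
  #|P| * e = #|V| ->
  #|[set f : {ffun I -> V} | [forall i in S, P (f i)]]| * e ^ #|S| = #|{: {ffun I -> V}}|.
Proof.
move=> He; rewrite card_ffun.
pose G := fun i : I => if i \in S then P else predT.
have -> : #|[set f : {ffun I -> V} | [forall i in S, P (f i)]]| =
   #|(family G : simpl_pred {ffun I -> V})|.
  apply: eq_card => f; rewrite inE; apply/forall_inP/familyP => H i.
    by rewrite /G; case: ifP => // /H.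
  by move=> iS; move: (H i); rewrite /G iS.
rewrite card_family /image_mem foldrE big_map big_enum /=.
rewrite -!prod_nat_const [X in _ * X]big_mkcond big_mkcond [X in _ = X]big_mkcond -big_split /=.
apply: eq_bigr => i _; rewrite /G; case: ifP => _; first by rewrite He.
by rewrite muln1; apply: eq_card.
Qed.

Definition good M r m (S : {set 'I_M}) (s : run M r m) (x : 'cV['F_2]_m) : bool :=
  [forall u in S, ((s u).1 *m x + (s u).2 == 0)%R].

Lemma count1 M r m (S : {set 'I_M}) x :
  #|[set s : run M r m | good S s x]| * #|{: 'cV['F_2]_r}| ^ #|S| = #|{: run M r m}|.
Proof.
apply: (@famcount _ _ S [pred a : vrand r m | (a.1 *m x + a.2 == 0)%R]).
rewrite /vrand card_prod -(L1 r x); congr (_ * _); apply: eq_card => a; by rewrite !inE.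
Qed.

Lemma count2 M r m (S : {set 'I_M}) x y : x != y ->
  #|[set s : run M r m | good S s x && good S s y]| * (#|{: 'cV['F_2]_r}| * #|{: 'cV['F_2]_r}|) ^ #|S|
   = #|{: run M r m}|.
Proof.
move=> nxy.
have -> : [set s : run M r m | good S s x && good S s y] =
  [set s : run M r m | [forall u in S, [pred a : vrand r m | ((a.1 *m x + a.2 == 0) && (a.1 *m y + a.2 == 0))%R] (s u)]].
  apply/setP => s; rewrite !inE /good; apply/andP/forall_inP => [[/forall_inP H1 /forall_inP H2] u uS|H].
    by rewrite /= H1 ?H2.
  by split; apply/forall_inP => u /H /andP[].
apply: famcount.
rewrite /vrand card_prod mulnA -(L2 r nxy); congr (_ * _ * _); apply: eq_card => a; by rewrite !inE.
Qed.
Lemma sum_bool_card (T : finType) (b : pred T) : \sum_s (b s : nat) = #|[set s | b s]|.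
Proof.
by rewrite -sum1_card [RHS]big_mkcond; apply: eq_bigr => s _; rewrite inE; case: (b s).
Qed.

Lemma amgm a b : 2 * (a * b) <= a ^ 2 + b ^ 2.
Proof.
wlog h : a b / a <= b.
  move=> H; have [h|h] := leqP a b; first exact: H.
  have := H b a (ltnW h); nia.
rewrite -(subnKC h); move: (b - a) => t; nia.
Qed.

Lemma pointwise K q z : K ^ 2 * (z == 0) + 2 * q * K * z <= q ^ 2 * z ^ 2 + K ^ 2.
Proof.
case: z => [|z] /=; first nia.
have := amgm (q * z.+1) K; nia.
Qed.

Lemma runbad M r m (S : {set 'I_M}) :
  2 * #|{: 'cV['F_2]_r}| ^ #|S| <= #|{: 'cV['F_2]_m}| ->
  2 * #|[set s : run M r m | ~~ [exists x, good S s x]]| <= #|{: run M r m}|.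
Proof.
move=> HK.
set c := #|{: 'cV['F_2]_r}|; set q := c ^ #|S|; set K := #|{: 'cV['F_2]_m}|; set T := #|{: run M r m}|.
pose Z (s : run M r m) := \sum_(x : 'cV['F_2]_m) (good S s x : nat).
have SZ : (\sum_(s : run M r m) Z s) * q = K * T.
  rewrite /Z exchange_big big_distrl /= (eq_bigr (fun _ => T)) ?sum_nat_const //= => x _.
  by rewrite sum_bool_card count1.
have SZ2 : (\sum_(s : run M r m) Z s ^ 2) * (q * q) = K * (T * q + (K - 1) * T).
  rewrite /Z; under eq_bigr => s _ do rewrite -mulnn big_distrlr /=.
  rewrite exchange_big big_distrl /= (eq_bigr (fun _ => T * q + (K - 1) * T)) ?sum_nat_const //= => x _.
  rewrite exchange_big big_distrl (bigD1 x) //=.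
  under eq_bigr => s _ do rewrite mulnb andbb.
  rewrite sum_bool_card mulnA count1.
  rewrite (eq_bigr (fun _ => T)); last first.
    move=> y ny; under eq_bigr => s _ do rewrite mulnb.
    by rewrite sum_bool_card /q -expnMn count2 // eq_sym.
  congr (_ + _).
  by rewrite subn1 -(cardC1 x) sum_nat_const.
have Pt : \sum_(s : run M r m) (K ^ 2 * (Z s == 0) + 2 * q * K * Z s) <=
           \sum_(s : run M r m) (q ^ 2 * Z s ^ 2 + K ^ 2).
  by apply: leq_sum => s _; exact: pointwise.
rewrite big_split /= -big_distrr /= -big_distrr /= big_split /= -big_distrr sum_nat_const /= in Pt.
have HX : \sum_(s : run M r m) (Z s == 0 : nat) = #|[set s : run M r m | ~~ [exists x, good S s x]]|.
  rewrite sum_bool_card; apply: eq_card => s; rewrite !inE /Z sum_nat_eq0 negb_exists.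
  by apply: eq_forallb => x; case: (good S s x).
rewrite HX in Pt.
move: Pt SZ SZ2 HK.
set X := #|[set s : run M r m | ~~ [exists x, good S s x]]|.
set A := \sum_(s : run M r m) Z s.
set B := \sum_(s : run M r m) Z s ^ 2.
have cpos : 0 < c by apply/card_gt0P; exists 0%R.
have qpos : 0 < q by rewrite expn_gt0 cpos.
rewrite /= -/T => Pt SZ SZ2 HK.
have Kpos : 0 < K by apply: leq_trans HK; rewrite muln_gt0.
rewrite mulnBl mul1n mulnDr mulnBr in SZ2.
have H1 : K * (K * X) + K * T <= K * (T * q).
  move: Pt; rewrite -[2 * q * K * A]/(2 * q * K * A).
  have -> : 2 * q * K * A = 2 * K * (A * q) by nia.
  have -> : q ^ 2 * B = B * (q * q) by rewrite mulnC.
  rewrite SZ SZ2; move=> Pt.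
  have KT : K * T <= K * (K * T) by rewrite leq_mul2l leq_pmull ?orbT.
  nia.
have H2 : K * X <= T * q.
  rewrite -(leq_pmul2l Kpos); apply: leq_trans H1; exact: leq_addr.
rewrite -(leq_pmul2l qpos); apply: (@leq_trans (K * X)); last by rewrite (mulnC q).
by rewrite mulnA (mulnC q); apply: leq_mul.
Qed.
Lemma found_good M N r m beta (Gam : 'I_N -> {set 'I_M}) (w : FFspace M r m beta) u v :
  found Gam w u v = [exists j, [exists x, good (Gam u :|: Gam v) (w j) x]].
Proof.
rewrite /found; apply: eq_existsb => j; apply: eq_existsb => x; rewrite /survset !inE /good.
apply/andP/forall_inP => [[/forall_inP H1 /forall_inP H2] z|H].
  by rewrite inE => /orP[/H1|/H2].
by split; apply/forall_inP => z zS; apply: H; rewrite inE zS ?orbT.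
Qed.

Lemma badFF M r m beta (S : {set 'I_M}) :
  2 * #|{: 'cV['F_2]_r}| ^ #|S| <= #|{: 'cV['F_2]_m}| ->
  #|[set w : FFspace M r m beta | ~~ [exists j, [exists x, good S (w j) x]]]| * 2 ^ beta
    <= #|{: FFspace M r m beta}|.
Proof.
move=> HK; have Hb := @runbad M r m S HK.
set Bad := [set s : run M r m | ~~ [exists x, good S s x]] in Hb.
have -> : #|[set w : FFspace M r m beta | ~~ [exists j, [exists x, good S (w j) x]]]| =
          #|(ffun_on Bad : simpl_pred (FFspace M r m beta))|.
  apply: eq_card => w; rewrite inE negb_exists; apply/forallP/ffun_onP => H j;
  by move: (H j); rewrite inE.
rewrite card_ffun_on /FFspace card_ffun !card_ord -expnMn mulnC.
case: beta => [|b]; first by rewrite !expn0.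
by rewrite leq_exp2r.
Qed.
Local Open Scope R_scope.
Lemma exp_le x y : x <= y -> exp x <= exp y.
Proof. intro H; destruct (Rle_lt_or_eq_dec _ _ H) as [h|h]; [left; apply exp_increasing; exact h| right; subst; reflexivity]. Qed.

Lemma INR2 : INR 2 = 2. Proof. simpl; ring. Qed.

Lemma INR_expn a n : INR (a ^ n)%N = INR a ^ n.
Proof. elim: n => [|n IH]; first by rewrite expn0. by rewrite expnS mulnE mult_INR IH. Qed.

Lemma INR_muln a b : INR (a * b)%N = INR a * INR b.
Proof. by rewrite mulnE mult_INR. Qed.

Lemma prob_le (T : finType) (E : {set T}) b :
  (0 < #|T|)%N -> (#|E| * 2 ^ b <= #|T|)%N -> prob E <= / 2 ^ b.
Proof.
move=> Tp H; rewrite /prob.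
have HT : 0 < INR #|T| by apply: lt_0_INR; apply/ltP.
have H2 : 0 < 2 ^ b by apply: pow_lt; lra.
have HE : INR #|E| * 2 ^ b <= INR #|T|.
  by move/leP: H => /le_INR; rewrite INR_muln INR_expn INR2.
apply (Rmult_le_reg_r (2 ^ b * INR #|T|)); first nra.
replace (INR #|E| / INR #|T| * (2 ^ b * INR #|T|)) with (INR #|E| * 2 ^ b) by (field; lra).
replace (/ 2 ^ b * (2 ^ b * INR #|T|)) with (INR #|T|) by (field; lra).
exact HE.
Qed.

Lemma compl_bound a b n : 0 < b -> 0 < n -> a * n <= b -> 1 - / n <= (b - a) / b.
Proof.
move=> hb hn h.
apply (Rmult_le_reg_r (n * b)); first nra.
replace ((1 - / n) * (n * b)) with (n * b - b) by (field; lra).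
replace ((b - a) / b * (n * b)) with (n * b - a * n) by (field; lra).
lra.
Qed.

Lemma FFpos M r m beta : (0 < #|{: FFspace M r m beta}|)%N.
Proof. by apply/card_gt0P; exists [ffun _ => [ffun _ => (0%R, 0%R)]]. Qed.

Lemma cardcV n : #|{: 'cV['F_2]_n}| = (2 ^ n)%N.
Proof. by rewrite card_mx card_Fp // muln1. Qed.

Unset Implicit Arguments.

Theorem mainTheorem5 (M N d m r beta : nat) (Gam : 'I_N -> {set 'I_M}) (tau : R) :
  (0 < m)%N -> (0 < r)%N -> (1 <= d)%N ->
  (forall v : 'I_N, #|Gam v| = d) ->
  0 < tau <= 1 ->
  2 ^ m * Rpower (/ 2 ^ r) ((2 - tau) * INR d) >= 2 ->
  (1 <= beta)%N ->
  (forall u v : 'I_N, closeb d Gam tau u v ->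
     prob [set w : FFspace M r m beta | ~~ found Gam w u v] <= / 2 ^ beta)
  /\
  ((2 <= N)%N -> INR beta >= 3 * (ln (INR N) / ln 2) ->
     prob [set w : FFspace M r m beta |
             [forall u : 'I_N, forall v : 'I_N, closeb d Gam tau u v ==> found Gam w u v]]
       >= 1 - / INR N).
Proof.
move=> m0 r0 d1 Gd Htau Hk b1.
have ln2 : 0 < ln 2 by have := ln_lt_2; lra.
have key : forall u v : 'I_N, closeb d Gam tau u v ->
   (#|[set w : FFspace M r m beta | ~~ found Gam w u v]| * 2 ^ beta <= #|{: FFspace M r m beta}|)%N.
  move=> u v /andP[_ Hc].
  have -> : [set w : FFspace M r m beta | ~~ found Gam w u v] =
     [set w : FFspace M r m beta | ~~ [exists j, [exists x, good (Gam u :|: Gam v) (w j) x]]].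
    by apply/setP => w; rewrite !inE found_good.
  apply: badFF.
  move: Hc; case: Rle_dec => // Hle _.
  have Hn : (#|Gam u :|: Gam v| + #|Gam u :&: Gam v| = d + d)%N by rewrite cardsUI !Gd.
  move: Hn Hle; set n := #|Gam u :|: Gam v|; set I := #|Gam u :&: Gam v| => Hn Hle.
  have HnR : INR n <= (2 - tau) * INR d.
    have : INR (n + I)%N = INR (d + d)%N by rewrite Hn.
    rewrite -!plusE !plus_INR; lra.
  rewrite !cardcV; apply/leP; apply: INR_le.
  rewrite INR_muln !INR_expn INR2.
  have p2r : 0 < 2 ^ r by apply: pow_lt; lra.
  have P0 : 0 < (2 ^ r) ^ n by apply: pow_lt.
  have Hmono : Rpower (/ 2 ^ r) ((2 - tau) * INR d) <= Rpower (/ 2 ^ r) (INR n).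
    rewrite /Rpower; apply: exp_le; rewrite ln_Rinv // ln_pow; last lra.
    have h0 : 0 <= INR r * ln 2 by have := pos_INR r; nra.
    have := Rmult_le_compat_l (INR r * ln 2) _ _ h0 HnR; lra.
  rewrite Rpower_pow in Hmono; last by apply: Rinv_0_lt_compat.
  rewrite pow_inv in Hmono.
  have H2 : 2 <= 2 ^ m * / (2 ^ r) ^ n.
    apply: Rle_trans (Rge_le _ _ Hk) _; apply: Rmult_le_compat_l => //.
    apply: pow_le; lra.
  have H3 := Rmult_le_compat_r ((2 ^ r) ^ n) _ _ (Rlt_le _ _ P0) H2.
  replace (2 ^ m * / (2 ^ r) ^ n * (2 ^ r) ^ n) with (2 ^ m) in H3 by (field; lra); lra.
split.
  move=> u v Hc; apply: prob_le; [exact: FFpos | exact: key].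
move=> N2 Hbeta.
have Npos : (0 < N)%N by apply: leq_trans N2.
have HN : 0 < INR N by apply: lt_0_INR; apply/ltP.
have N3 : (N ^ 3 <= 2 ^ beta)%N.
  apply/leP; apply: INR_le; rewrite !INR_expn INR2.
  rewrite -(exp_ln (INR N ^ 3)); last by apply: pow_lt.
  rewrite -(exp_ln (2 ^ beta)); last by apply: pow_lt; lra.
  apply: exp_le; rewrite !ln_pow //; last lra.
  have := Rmult_le_compat_r (ln 2) _ _ (Rlt_le _ _ ln2) (Rge_le _ _ Hbeta).
  replace (3 * (ln (INR N) / ln 2) * ln 2) with (3 * ln (INR N)) by (field; lra).
  rewrite /= ; lra.
set G := [set w : FFspace M r m beta |
             [forall u : 'I_N, forall v : 'I_N, closeb d Gam tau u v ==> found Gam w u v]].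
set FF := #|{: FFspace M r m beta}|.
have step1 : (#|~: G| <= \sum_(u : 'I_N) \sum_(v : 'I_N)
     #|[set w : FFspace M r m beta | closeb d Gam tau u v && ~~ found Gam w u v]|)%N.
  have -> : #|~: G| = (\sum_(w : FFspace M r m beta) ((w \in ~: G) : nat))%N.
    by rewrite sum_bool_card; apply: eq_card => w; rewrite inE.
  apply: (@leq_trans (\sum_(w : FFspace M r m beta) \sum_(u : 'I_N) \sum_(v : 'I_N)
      ((closeb d Gam tau u v && ~~ found Gam w u v) : nat))); last first.
    rewrite exchange_big; apply: leq_sum => u _; rewrite exchange_big; apply: leq_sum => v _.
    by rewrite sum_bool_card.
  apply: leq_sum => w _.
  case: (boolP (w \in ~: G)) => H //=.
  move: H; rewrite !inE => /forallPn [u /forallPn [v]]; rewrite negb_imply => Huv.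
  rewrite (bigD1 u) //= (bigD1 v) //= Huv; lia.
have step2 : ((\sum_(u : 'I_N) \sum_(v : 'I_N)
     #|[set w : FFspace M r m beta | closeb d Gam tau u v && ~~ found Gam w u v]|) * 2 ^ beta
     <= N * (N * FF))%N.
  apply: (@leq_trans (\sum_(u : 'I_N) \sum_(v : 'I_N) FF)); last by rewrite !sum_nat_const !card_ord.
  rewrite big_distrl /=; apply: leq_sum => u _; rewrite big_distrl /=; apply: leq_sum => v _.
  case Huv: (closeb d Gam tau u v).
    have -> : [set w : FFspace M r m beta | true && ~~ found Gam w u v] =
              [set w : FFspace M r m beta | ~~ found Gam w u v] by apply/setP => w; rewrite !inE.
    exact: key.
  have -> : [set w : FFspace M r m beta | false && ~~ found Gam w u v] = set0 by apply/setP => w; rewrite !inE.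
  by rewrite cards0.
have HC : (#|~: G| * N <= FF)%N.
  have h : (N * N * (#|~: G| * N) <= N * N * FF)%N.
    have e3 : (N * N * (#|~: G| * N) = #|~: G| * N ^ 3)%N by rewrite !expnS expn0; lia.
    rewrite e3 -mulnA; apply: leq_trans (leq_mul (leqnn _) N3) _.
    apply: leq_trans (leq_mul (step1) (leqnn _)) _; apply: leq_trans step2 _.
    by rewrite mulnA.
  by rewrite leq_pmul2l ?muln_gt0 ?Npos in h.
have cG := cardsC G.
rewrite /prob -/FF.
have -> : INR #|G| = INR FF - INR #|~: G| by rewrite /FF -cG plus_INR; ring.
apply: Rle_ge; apply: compl_bound => //.
  by apply: lt_0_INR; apply/ltP; exact: FFpos.
move/leP: HC => /le_INR; by rewrite INR_muln.
Qed.
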